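(* Let $n>1$, $a\in\mathcal{T}_n$ with $\operatorname{ran}(a)=\{a_1,\dots,a_p\}$ ($p=\operatorname{rank}(a)$), and put $n(a_i)=|a^{-1}(a_i)|$ for $1\le i\le p$. In the semigroup $(\mathcal{T}_n,*_a)$: for each $1\le m\le p$ there are exactly $S(n,m)$ $\mathcal{R}$-classes with more than one element consisting of maps of rank $m$, each of cardinality $$m!\sum_{1\le i_1<i_2<\cdots<i_m\le p} n(a_{i_1})\cdots n(a_{i_m});$$ these are all the multi-element $\mathcal{R}$-classes, so their number is $\sum_{m=1}^{p}S(n,m)$, and the number of one-element $\mathcal{R}$-classes equals $$n^n-\sum_{m=1}^{p}S(n,m)\,m!\sum_{1\le i_1<\cdots<i_m\le p} n(a_{i_1})\cdots n(a_{i_m}).$$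
   Context: $\mathcal{T}_n$ is the set of all maps $N\to N$, $N=\{1,\dots,n\}$. Maps are composed from left to right: $(xy)(i)=y(x(i))$. For fixed $a\in\mathcal{T}_n$, $x*_a y:=xay$. $\operatorname{ran}(x)$ is the image of $x$, $\operatorname{rank}(x)=|\operatorname{ran}(x)|$, $a^{-1}(a_i)$ is the full preimage of $a_i$. Green's relation: $x\mathcal{R}y$ iff $xS^1=yS^1$, where $S^1$ is the semigroup with an identity adjoined. $S(r,k)$ is the Stirling number of the second kind. *)

(* Defs.v *)
From mathcomp Require Import all_boot.
Set Implicit Arguments. Unset Strict Implicit. Unset Printing Implicit Defensive.

(* Full transformation monoid T_n : maps 'I_n -> 'I_n (points 0..n-1 stand for 1..n). *)
Definition Tn (n : nat) := {ffun 'I_n -> 'I_n}.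

(* Left-to-right composition: (x y)(i) = y (x i). *)
Definition tcomp n (x y : Tn n) : Tn n := [ffun i => y (x i)].

Definition sand n (a x y : Tn n) : Tn n := tcomp (tcomp x a) y.

Definition ran n (x : Tn n) : {set 'I_n} := [set x i | i : 'I_n].
Definition rank n (x : Tn n) : nat := #|ran x|.

(* Principal right ideal x S^1 in the semigroup (T_n, *_a). *)
Definition rideal n (a x : Tn n) : {set Tn n} := x |: [set sand a x z | z : Tn n].

Definition Rrel n (a x y : Tn n) : bool := rideal a x == rideal a y.

Definition Rclass n (a x : Tn n) : {set Tn n} := [set y | Rrel a x y].
Definition Rclasses n (a : Tn n) : {set {set Tn n}} := [set Rclass a x | x : Tn n].

Fixpoint stirling2 (n k : nat) : nat :=
  match n, k with
  | 0, 0 => 1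
  | 0, _.+1 => 0
  | _.+1, 0 => 0
  | n'.+1, k'.+1 => k'.+1 * stirling2 n' k'.+1 + stirling2 n' k'
  end.

Definition fibsize n (a : Tn n) (b : 'I_n) : nat := #|[set i | a i == b]|.

(* sum over i_1 < ... < i_m of n(a_{i_1}) ... n(a_{i_m}), i.e. over m-subsets of ran(a). *)
Definition fibesum n (a : Tn n) (m : nat) : nat :=
  \sum_(B : {set 'I_n} | (B \subset ran a) && (#|B| == m)) \prod_(b in B) fibsize a b.

(* Main.v *)
Require Import Defs.
From mathcomp Require Import all_boot.
Set Implicit Arguments. Unset Strict Implicit. Unset Printing Implicit Defensive.

Section Part.
Variable T : finType.
Implicit Types (A B C : {set T}) (P Q : {set {set T}}).

Lemma partP P A : partition P A <->
  [/\ set0 \notin P, (forall B, B \in P -> B \subset A),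
      (forall y, y \in A -> exists2 B, B \in P & y \in B) &
      (forall B C y, B \in P -> C \in P -> y \in B -> y \in C -> B = C)].
Proof.
split.
  case/and3P => /eqP cov triv n0; split => //.
  - by move=> B BP; rewrite -cov; apply: bigcup_sup.
  - by move=> y; rewrite -cov => /bigcupP[B BP yB]; exists B.
  - move=> B C y BP CP yB yC; case: (eqVneq B C) => // neq.
    by rewrite (disjointFr (trivIsetP triv B C BP CP neq) yB) in yC.
case=> n0 sub cov D; apply/and3P; split => //.
  apply/eqP/setP => y; apply/bigcupP/idP => [[B BP yB]|/cov [B BP yB]].
    by apply: (subsetP (sub B BP)).
  by exists B.
apply/trivIsetP => B C BP CP neq; rewrite -setI_eq0; apply/eqP/setP => y.
rewrite !inE; apply/negbTE/negP => /andP[yB yC].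
by rewrite (D _ _ _ BP CP yB yC) eqxx in neq.
Qed.

Definition Pi A m := [set P | partition P A && (#|P| == m)].

Lemma Pi_set0 m : #|Pi set0 m| = stirling2 0 m.
Proof.
have -> : Pi set0 m = if m == 0 then [set set0] else set0.
  apply/setP => P; rewrite !inE partition_set0.
  by case: m => [|m] /=; rewrite ?inE; case: (eqVneq P set0) => [->|] //=; rewrite cards0.
by case: m => [|m]; rewrite /= ?cards1 ?cards0.
Qed.


Lemma Pi_notx x A k Q C : Q \in Pi (A :\ x) k -> C \in Q -> x \notin C.
Proof.
rewrite inE => /andP[/partP[_ sub _ _] _] /sub /subsetP sC.
by apply/negP => /sC; rewrite !inE eqxx.
Qed.

Lemma neq_set1_0 (x : T) : (set0 == [set x]) = false.
Proof. by apply/negbTE/eqP => /setP /(_ x); rewrite !inE eqxx. Qed.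

Lemma X1_eq x A m : x \in A ->
  [set P in Pi A m.+1 | [set x] \in P] = (fun Q => [set x] |: Q) @: Pi (A :\ x) m.
Proof.
move=> xA; apply/setP => P; rewrite !inE; apply/andP/imsetP.
- case=> /andP[/partP[n0 sub cov D] /eqP cP] xP.
  exists (P :\ [set x]); last by rewrite setD1K.
  rewrite inE; apply/andP; split; last first.
    by move: cP; rewrite (cardsD1 [set x]) xP add1n => [[->]].
  apply/partP; split.
  + by rewrite !inE (negbTE n0) andbF.
  + move=> B; rewrite !inE => /andP[Bx BP]; apply/subsetP => y yB.
    rewrite !inE (subsetP (sub B BP) y yB) andbT; apply/eqP => yx; subst y.
    by rewrite (D B [set x] x BP xP yB (set11 x)) eqxx in Bx.
  + move=> y; rewrite !inE => /andP[yx yA]; have [B BP yB] := cov y yA.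
    exists B => //; rewrite !inE BP andbT; apply/eqP => Bx.
    by move: yB; rewrite Bx inE (negbTE yx).
  + move=> B C y; rewrite !inE => /andP[_ BP] /andP[_ CP]; exact: D.
- case=> Q /[!inE] /andP[QP /eqP cQ] ->.
  have QPi : Q \in Pi (A :\ x) m by rewrite inE QP cQ eqxx.
  have xQ : [set x] \notin Q by apply/negP => /(Pi_notx QPi); rewrite inE eqxx.
  move/partP: QP => [n0 sub cov D].
  split; last exact: setU11.
  apply/andP; split; last by rewrite cardsU1 xQ cQ.
  apply/partP; split.
  + by rewrite !inE negb_or n0 andbT neq_set1_0.
  + move=> B; rewrite !inE => /orP[/eqP->|/sub sB]; first by rewrite sub1set.
    exact: subset_trans sB (subD1set _ _).
  + move=> y yA; case: (eqVneq y x) => [->|yx].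
      by exists [set x]; rewrite !inE ?eqxx.
    have [B BP yB] : exists2 B, B \in Q & y \in B by apply: cov; rewrite !inE yx.
    by exists B; rewrite // !inE BP orbT.
  + move=> B C y; rewrite !inE => /orP[/eqP->|BQ] /orP[/eqP->|CQ] // yB yC.
    * move: yB; rewrite inE => /eqP yx; subst y.
      by have := subsetP (sub C CQ) x yC; rewrite !inE eqxx.
    * move: yC; rewrite inE => /eqP yx; subst y.
      by have := subsetP (sub B BQ) x yB; rewrite !inE eqxx.
    * exact: (D B C y BQ CQ yB yC).
Qed.

Lemma X1_card x A m : x \in A ->
  #|[set P in Pi A m.+1 | [set x] \in P]| = #|Pi (A :\ x) m|.
Proof.
move=> xA; rewrite X1_eq //; apply: card_in_imset => Q1 Q2 Q1P Q2P E.
have n1 : [set x] \notin Q1 by apply/negP => /(Pi_notx Q1P); rewrite inE eqxx.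
have n2 : [set x] \notin Q2 by apply/negP => /(Pi_notx Q2P); rewrite inE eqxx.
by rewrite -(setU1K n1) E setU1K.
Qed.


Definition ins (x : T) Q B := (x |: B) |: (Q :\ B).
Definition Dom A m := [set u : {set {set T}} * {set T} | (u.1 \in Pi A m) && (u.2 \in u.1)].

Lemma X2_eq x A m : x \in A ->
  [set P in Pi A m.+1 | [set x] \notin P] =
  (fun u => ins x u.1 u.2) @: Dom (A :\ x) m.+1.
Proof.
move=> xA; apply/setP => P; rewrite !inE; apply/andP/imsetP.
- case=> /andP[/partP[n0 sub cov D] /eqP cP] xP.
  have [B0 B0P xB0] := cov x xA.
  have Bn0 : B0 :\ x != set0.
    apply/negP => /eqP B0e; suff: B0 = [set x] by move=> E; rewrite -E B0P in xP.
    apply/eqP; rewrite eqEsubset sub1set xB0 andbT; apply/subsetP => y yB0.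
    rewrite inE; apply: contraT => yx.
    have : y \in B0 :\ x by rewrite !inE yx.
    by rewrite B0e inE.
  have BnP : B0 :\ x \notin P :\ B0.
    apply/negP; rewrite !inE => /andP[neq BP].
    case/set0Pn: Bn0 => y yB; have := yB; rewrite !inE => /andP[_ yB0].
    by rewrite (D _ _ y BP B0P yB yB0) eqxx in neq.
  have nxC : forall C, C \in P -> C != B0 -> x \notin C.
    move=> C CP neq; apply/negP => xC.
    by rewrite (D _ _ x CP B0P xC xB0) eqxx in neq.
  exists ((B0 :\ x) |: (P :\ B0), B0 :\ x); last first.
    by rewrite /ins /= setD1K // setU1K // setD1K.
  rewrite /Dom !inE /= eqxx /= andbT; apply/andP; split; last first.
    by rewrite cardsU1 BnP add1n; move: cP; rewrite (cardsD1 B0) B0P add1n => [[->]].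
  apply/partP; split.
  + by rewrite !inE negb_or eq_sym Bn0 (negbTE n0) andbF.
  + move=> C; rewrite !inE => /orP[/eqP->|/andP[neq CP]].
      by rewrite setSD // sub.
    apply/subsetP => y yC; rewrite !inE (subsetP (sub C CP) y yC) andbT.
    by apply/eqP => yx; subst y; move: (nxC C CP neq); rewrite yC.
  + move=> y; rewrite !inE => /andP[yx yA]; have [C CP yC] := cov y yA.
    case: (eqVneq C B0) => [CB|neq].
      by exists (B0 :\ x); rewrite !inE ?eqxx // yx -CB yC.
    by exists C; rewrite // !inE neq CP orbT.
  + move=> C1 C2 y; rewrite !inE.
    have H : forall C, C != B0 -> C \in P -> y \in B0 :\ x -> y \in C -> False.
      move=> C neq CP; rewrite !inE => /andP[_ yB0] yC.
      by rewrite (D _ _ y CP B0P yC yB0) eqxx in neq.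
    case/orP => [/eqP->|/andP[n1 P1]]; case/orP => [/eqP->|/andP[n2 P2]] //.
    * by move=> y1 y2; case: (H _ n2 P2 y1 y2).
    * by move=> y1 y2; case: (H _ n1 P1 y2 y1).
    * by move=> y1 y2; exact: (D _ _ y P1 P2 y1 y2).
- case=> [[Q B]] /[!inE] /= /andP[/andP[QP /eqP cQ] BQ] ->.
  have QPi : Q \in Pi (A :\ x) m.+1 by rewrite inE QP cQ eqxx.
  have hx : forall C, C \in Q -> x \notin C by move=> C; apply: Pi_notx QPi.
  move/partP: QP => [n0 sub cov D].
  have Bn : x |: B \notin Q :\ B.
    by apply/negP; rewrite !inE => /andP[_ /hx]; rewrite setU11.
  have Bne : B != set0 by apply/negP => /eqP E; rewrite -E BQ in n0.
  rewrite /ins; split; last first.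
    rewrite !inE negb_or; apply/andP; split.
      apply/negP => /eqP /setP E; case/set0Pn: Bne => y yB.
      have : y \in [set x] by rewrite E !inE yB orbT.
      rewrite inE => /eqP yx; subst y.
      by move: (hx B BQ); rewrite yB.
    by apply/negP => /andP[_ /hx]; rewrite inE eqxx.
  apply/andP; split; last first.
    by rewrite cardsU1 Bn add1n -cQ (cardsD1 B Q) BQ.
  apply/partP; split.
  + rewrite !inE negb_or (negbTE n0) andbF andbT; apply/negP => /eqP /setP /(_ x).
    by rewrite !inE eqxx.
  + move=> C; rewrite !inE => /orP[/eqP->|/andP[_ /sub sC]].
      apply/subsetP => y; rewrite !inE => /orP[/eqP->//|yB].
      by have := subsetP (sub B BQ) y yB; rewrite !inE => /andP[].
    exact: subset_trans sC (subD1set _ _).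
  + move=> y yA; case: (eqVneq y x) => [->|yx].
      by exists (x |: B); rewrite !inE ?eqxx.
    have [C CQ yC] : exists2 C, C \in Q & y \in C by apply: cov; rewrite !inE yx.
    case: (eqVneq C B) => [CB|neq].
      by exists (x |: B); rewrite !inE ?eqxx // -CB yC orbT.
    by exists C; rewrite // !inE neq CQ orbT.
  + move=> C1 C2 y; rewrite !inE.
    have H : forall C, C != B -> C \in Q -> y \in x |: B -> y \in C -> False.
      move=> C neq CQ; rewrite !inE => /orP[/eqP yx|yB] yC.
        by subst y; move: (hx C CQ); rewrite yC.
      by rewrite (D _ _ y CQ BQ yC yB) eqxx in neq.
    case/orP => [/eqP->|/andP[n1 P1]]; case/orP => [/eqP->|/andP[n2 P2]] //.
    * by move=> y1 y2; case: (H _ n2 P2 y1 y2).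
    * by move=> y1 y2; case: (H _ n1 P1 y2 y1).
    * by move=> y1 y2; exact: (D _ _ y P1 P2 y1 y2).
Qed.


Lemma X2_card x A m : x \in A ->
  #|[set P in Pi A m.+1 | [set x] \notin P]| = m.+1 * #|Pi (A :\ x) m.+1|.
Proof.
move=> xA; rewrite X2_eq // card_in_imset; last first.
  move=> [Q1 B1] [Q2 B2]; rewrite /Dom inE /= => /andP[Q1P B1Q]; rewrite inE /= => /andP[Q2P B2Q].
  rewrite /ins => E.
  have hx1 := Pi_notx Q1P; have hx2 := Pi_notx Q2P.
  have xB1 : x \notin B1 := hx1 _ B1Q.
  have xB2 : x \notin B2 := hx2 _ B2Q.
  have uniqx : forall Q B C, (forall C, C \in Q -> x \notin C) ->
      C \in (x |: B) |: (Q :\ B) -> x \in C -> C = x |: B.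
    move=> Q B C hx; rewrite !inE => /orP[/eqP->//|/andP[_ /hx /negbTE ->]] //.
  have EB : x |: B1 = x |: B2.
    apply: (uniqx Q2 B2 _ hx2); last exact: setU11.
    by rewrite -E setU11.
  have eB : B1 = B2 by rewrite -(setU1K xB1) EB setU1K.
  subst B2.
  have n1 : x |: B1 \notin Q1 :\ B1.
    by apply/negP; rewrite !inE => /andP[_ /hx1]; rewrite setU11.
  have n2 : x |: B1 \notin Q2 :\ B1.
    by apply/negP; rewrite !inE => /andP[_ /hx2]; rewrite setU11.
  have EQ : Q1 :\ B1 = Q2 :\ B1 by rewrite -(setU1K n1) E setU1K.
  by rewrite -(setD1K B1Q) EQ setD1K.
rewrite -sum1_card.
rewrite (eq_bigl (fun u => (u.1 \in Pi (A :\ x) m.+1) && (u.2 \in u.1))); last first.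
  by move=> u; rewrite /Dom inE.
rewrite -(pair_big_dep (fun Q => Q \in Pi (A :\ x) m.+1) (fun Q B => B \in Q)
   (fun _ _ => 1)) /=.
rewrite (eq_bigr (fun _ => m.+1)); last first.
  by move=> Q; rewrite sum1_card inE => /andP[_ /eqP].
by rewrite sum_nat_const mulnC.
Qed.

Lemma Pi_count k : forall (A : {set T}) m, #|A| = k -> #|Pi A m| = stirling2 k m.
Proof.
elim: k => [|k IH] A m cA.
  by move/eqP: cA; rewrite cards_eq0 => /eqP ->; exact: Pi_set0.
have [x xA] : exists x, x \in A by apply/card_gt0P; rewrite cA.
have cA' : #|A :\ x| = k by move: cA; rewrite (cardsD1 x) xA add1n => [[]].
case: m => [|m].
  apply/eqP; rewrite cards_eq0; apply/eqP/setP => P; rewrite !inE.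
  apply/negbTE/negP => /andP[/partP[n0 _ cov _] /eqP cP].
  have [B BP _] := cov x xA; move/eqP: cP; rewrite cards_eq0 => /eqP cP.
  by rewrite cP inE in BP.
rewrite -(cardsID [set P : {set {set T}} | [set x] \in P]).
have -> : Pi A m.+1 :&: [set P : {set {set T}} | [set x] \in P] = [set P in Pi A m.+1 | [set x] \in P].
  by apply/setP => P; rewrite !inE.
have -> : Pi A m.+1 :\: [set P : {set {set T}} | [set x] \in P] = [set P in Pi A m.+1 | [set x] \notin P].
  by apply/setP => P; rewrite !inE andbC.
by rewrite X1_card // X2_card // !IH // addnC.
Qed.

End Part.


Section Main.
Variable n : nat.
Variable a : Tn n.
Implicit Types x y z u w : Tn n.

Definition kle u w := [forall i, forall j, (u i == u j) ==> (w i == w j)].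
Definition KS u := [set w | kle u w].
Definition regb x := kle (tcomp x a) x.
Definition kcl x i := [set j | x j == x i].
Definition kcls x := [set kcl x i | i : 'I_n].
Lemma kcl_mem x i : i \in kcl x i.
Proof. by rewrite inE. Qed.

Lemma kleP u w : reflect (forall i j, u i = u j -> w i = w j) (kle u w).
Proof.
apply: (iffP forallP) => [H i j e | H i].
  by have /forallP/(_ j)/implyP/(_ (introT eqP e))/eqP := H i.
by apply/forallP => j; apply/implyP => /eqP e; apply/eqP; exact: H e.
Qed.

Lemma tcompE x y i : tcomp x y i = y (x i).
Proof. by rewrite ffunE. Qed.

Lemma kle_refl u : kle u u.
Proof. by apply/kleP. Qed.

Lemma kle_trans u v w : kle u v -> kle v w -> kle u w.
Proof. by move=> /kleP h1 /kleP h2; apply/kleP => i j /h1 /h2. Qed.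

Lemma kle_comp x y : kle x (tcomp x y).
Proof. by apply/kleP => i j e; rewrite !tcompE e. Qed.

Lemma imset_sand y : [set sand a y z | z : Tn n] = KS (tcomp y a).
Proof.
apply/setP => w; rewrite inE; apply/imsetP/kleP.
  by case=> z _ -> i j e; rewrite /sand !tcompE -!(tcompE y a) e.
move=> H.
exists [ffun b => if [pick i | tcomp y a i == b] is Some i then w i else b] => //.
apply/ffunP => i; rewrite /sand !tcompE ffunE.
case: pickP => [j /eqP Hj | H0]; first by apply: H; rewrite Hj tcompE.
by have := H0 i; rewrite tcompE eqxx.
Qed.

Lemma rideal_eq y : rideal a y = y |: KS (tcomp y a).
Proof. by rewrite /rideal imset_sand. Qed.

Lemma KS_eq u v : (KS u == KS v) = kle u v && kle v u.
Proof.
apply/eqP/andP => [E|[k1 k2]].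
  have : u \in KS v by rewrite -E inE kle_refl.
  have : v \in KS u by rewrite E inE kle_refl.
  by rewrite !inE => -> ->.
by apply/setP => w; rewrite !inE; apply/idP/idP => h; apply: kle_trans h.
Qed.

Lemma ridealR x : regb x -> rideal a x = KS x.
Proof.
move=> r; rewrite rideal_eq; have -> : KS (tcomp x a) = KS x.
  by apply/eqP; rewrite KS_eq kle_comp andbT.
by apply/setUidPr; rewrite sub1set inE kle_refl.
Qed.

Definition sw (c d t : 'I_n) := if t == c then d else if t == d then c else t.

Lemma Rrel_reg x y : regb x -> Rrel a x y = regb y && kle x y && kle y x.
Proof.
move=> rx; rewrite /Rrel (ridealR rx); apply/eqP/idP.
- move=> H; case ry: (regb y).
    by move: H; rewrite (ridealR ry) => /eqP; rewrite KS_eq.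
  exfalso; move/negbT: ry; rewrite /regb => /forallPn [i /forallPn [j]].
  rewrite negb_imply => /andP[/eqP e ne].
  have yK : y \in KS x by rewrite H rideal_eq setU11.
  move: yK; rewrite inE => /kleP yK.
  pose w : Tn n := [ffun k => sw (y i) (y j) (y k)].
  have wK : w \in KS x.
    by rewrite inE; apply/kleP => k l e'; rewrite !ffunE (yK k l e').
  move: wK; rewrite H rideal_eq !inE => /orP[/eqP wy|/kleP hw].
    have := congr1 (fun f : Tn n => f i) wy; rewrite /w ffunE /sw eqxx => E.
    by rewrite E eqxx in ne.
  have := hw i j e; rewrite !ffunE /sw eqxx eq_sym (negbTE ne) eqxx => E.
  by rewrite E eqxx in ne.
- case/andP => [/andP[ry k1] k2]; rewrite (ridealR ry); apply/eqP.
  by rewrite KS_eq k1 k2.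
Qed.

Lemma Rrel_nreg x y : ~~ regb x -> Rrel a x y = (y == x).
Proof.
move=> nx; apply/idP/eqP => [H|->]; last by rewrite /Rrel eqxx.
case ry: (regb y).
  have : Rrel a y x by rewrite /Rrel eq_sym.
  by rewrite Rrel_reg // => /andP[/andP[rx _] _]; rewrite rx in nx.
apply/eqP; apply: contraT => neq.
move: H; rewrite /Rrel !rideal_eq => /eqP H.
have : x \in y |: KS (tcomp y a) by rewrite -H setU11.
rewrite !inE eq_sym (negbTE neq) /= => k1.
have : y \in x |: KS (tcomp x a) by rewrite H setU11.
rewrite !inE (negbTE neq) /= => k2.
by move: nx; rewrite /regb (kle_trans k2 (kle_trans (kle_comp y a) k1)).
Qed.

Lemma RclassR x : regb x -> Rclass a x = [set y | regb y && kle x y && kle y x].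
Proof. by move=> r; apply/setP => y; rewrite !inE Rrel_reg. Qed.

Lemma RclassN x : ~~ regb x -> Rclass a x = [set x].
Proof. by move=> r; apply/setP => y; rewrite !inE Rrel_nreg. Qed.


Lemma foldr_prod (s : seq nat) : foldr muln 1 s = \prod_(i <- s) i.
Proof. by elim: s => [|x s IH]; rewrite ?big_nil ?big_cons //= IH. Qed.

Definition ainj m (g : {ffun 'I_m -> 'I_n}) :=
  [forall k, forall l, (a (g k) == a (g l)) ==> (k == l)].

Lemma fib0 b : b \notin ran a -> fibsize a b = 0.
Proof.
move=> nb; apply/eqP; rewrite cards_eq0; apply/eqP/setP => i; rewrite !inE.
apply/negbTE/eqP => e; move/negP: nb; apply; apply/imsetP; exists i => //.
Qed.

Lemma count_ainj m : #|[set g | @ainj m g]| = m`! * fibesum a m.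
Proof.
pose p (g : {ffun 'I_m -> 'I_n}) : {ffun 'I_m -> 'I_n} := [ffun k => a (g k)].
rewrite -sum1_card (eq_bigl (fun g => @ainj m g)); last by move=> g; rewrite inE.
rewrite (partition_big p (fun h => injectiveb h)); last first.
  move=> g /forallP H; apply/injectiveP => k l; rewrite !ffunE => e.
  by have /forallP /(_ l) /implyP /(_ (introT eqP e)) /eqP := H k.
under eq_bigr => h hinj.
  rewrite (eq_bigl (fun g => g \in [set g | p g == h])); last first.
    move=> g; rewrite inE; apply/andP/idP => [[//]|pgh]; split => //.
    apply/forallP => k; apply/forallP => l; apply/implyP => e.
    have : p g k == p g l by rewrite !ffunE.
    by rewrite (eqP pgh) => /eqP /(injectiveP _ hinj) ->.
  rewrite sum1_card.
  have -> : #|[set g | p g == h]| =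
     #|(family (fun k => [pred i | a i == h k]) : simpl_pred {ffun 'I_m -> 'I_n})|.
    apply: eq_card => g; rewrite !inE; apply/eqP/familyP => [E k|H].
      by rewrite inE -E ffunE.
    by apply/ffunP => k; rewrite ffunE; have := H k; rewrite inE => /eqP.
  rewrite card_family foldr_prod big_image.
  over.
rewrite (eq_bigr (fun h : {ffun 'I_m -> 'I_n} => \prod_k fibsize a (h k))); last first.
  by move=> h _; apply: eq_bigr => k _; apply: eq_card => i; rewrite inE.
rewrite (partition_big (fun h : {ffun 'I_m -> 'I_n} => [set h k | k : 'I_m])
           (fun B => #|B| == m)); last first.
  by move=> h /injectiveP hi; rewrite card_imset // card_ord.
rewrite (eq_bigr (fun B : {set 'I_n} => m`! * \prod_(b in B) fibsize a b)); last first.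
  move=> B /eqP cB.
  rewrite (eq_bigr (fun _ => \prod_(b in B) fibsize a b)); last first.
    move=> h /andP[/injectiveP hi /eqP <-]; rewrite big_imset //.
    by move=> k l _ _; exact: hi.
  rewrite (eq_bigl (mem [set h : {ffun 'I_m -> 'I_n} | injectiveb h &&
                                ([set h k | k : 'I_m] == B)])); last first.
    by move=> h; rewrite !inE.
  rewrite sum_nat_const; congr (_ * _).
  have -> : [set h : {ffun 'I_m -> 'I_n} | injectiveb h && ([set h k | k : 'I_m] == B)]
      = [set f in ffun_on B | injectiveb f].
    apply/setP => h; rewrite !inE; apply/andP/andP => [[hi /eqP E]|[hon hi]].
      split => //; apply/ffun_onP => k; rewrite -E; apply/imsetP; exists k => //.
    split => //; have hi' := injectiveP _ hi.
    rewrite eqEcard card_imset // card_ord cB leqnn andbT.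
    by apply/subsetP => b /imsetP[k _ ->]; move/ffun_onP: hon; apply.
  by rewrite card_inj_ffuns_on card_ord cB ffactnn.
rewrite -big_distrr /fibesum; congr (_ * _).
rewrite (bigID (fun B : {set 'I_n} => B \subset ran a)) /=.
rewrite [X in _ + X]big1 ?addn0; first by apply: eq_bigl => B; rewrite andbC.
move=> B /andP[_ /subsetPn [b bB nb]].
by rewrite (bigD1 b bB) /= fib0 // mul0n.
Qed.


Lemma kcl_eq x i j : (kcl x i == kcl x j) = (x i == x j).
Proof.
apply/eqP/eqP => [E|e]; last by apply/setP => k; rewrite !inE e.
have : i \in kcl x j by rewrite -E inE.
by rewrite inE => /eqP.
Qed.

Lemma kle_kcls x y : (kle x y && kle y x) = (kcls x == kcls y).
Proof.
apply/andP/eqP => [[/kleP h1 /kleP h2]|E].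
  have e : forall i, kcl x i = kcl y i.
    move=> i; apply/setP => k; rewrite !inE; apply/eqP/eqP; [exact: h1|exact: h2].
  by apply/setP => Q; apply/imsetP/imsetP => [[i _ ->]|[i _ ->]]; exists i; rewrite ?e.
have e : forall i, kcl x i = kcl y i.
  move=> i; have : kcl x i \in kcls y by rewrite -E; apply/imsetP; exists i.
  case/imsetP => k _ Ek; have : i \in kcl y k by rewrite -Ek inE.
  by rewrite inE => /eqP yi; rewrite Ek; apply/setP => j; rewrite !inE yi.
split; apply/kleP => i j e'.
  have : j \in kcl x i by rewrite inE e'.
  by rewrite e inE => /eqP ->.
have : j \in kcl y i by rewrite inE e'.
by rewrite -e inE => /eqP ->.
Qed.

Lemma rank_kcls x : rank x = #|kcls x|.
Proof.
have -> : kcls x = (fun b => [set j | x j == b]) @: ran x.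
  by rewrite /ran -imset_comp.
rewrite card_in_imset // => b1 b2 /imsetP[i _ ->] _ E.
have : i \in [set j | x j == b2] by rewrite -E inE.
by rewrite inE => /eqP.
Qed.

Lemma kcls_part x : partition (kcls x) [set: 'I_n].
Proof.
apply/partP; split.
- apply/imsetP => [[i _ E]]; have : i \in kcl x i by rewrite inE.
  by rewrite -E inE.
- by move=> B _; apply: subsetT.
- by move=> y _; exists (kcl x y); [apply/imsetP; exists y|rewrite inE].
- move=> B C y /imsetP[i _ ->] /imsetP[j _ ->]; rewrite !inE => /eqP e1 /eqP e2.
  by apply/eqP; rewrite kcl_eq -e1 e2.
Qed.

Definition rep (i0 : 'I_n) (Q : {set 'I_n}) := odflt i0 [pick j in Q].

Lemma rep_mem i0 (Q : {set 'I_n}) i : i \in Q -> rep i0 Q \in Q.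
Proof. by move=> iQ; rewrite /rep; case: pickP => [j //|/(_ i)]; rewrite iQ. Qed.

Lemma kcls_repr i0 x Q : Q \in kcls x -> Q = kcl x (rep i0 Q).
Proof.
case/imsetP => i _ ->; have : rep i0 (kcl x i) \in kcl x i by apply: rep_mem (kcl_mem x i).
by rewrite inE => e; apply/eqP; rewrite kcl_eq eq_sym.
Qed.

Lemma class_card x (i0 : 'I_n) : regb x ->
  #|Rclass a x| = (rank x)`! * fibesum a (rank x).
Proof.
move=> rx; rewrite rank_kcls.
have -> : Rclass a x = [set y | regb y && (kcls y == kcls x)].
  by apply/setP => y; rewrite RclassR // !inE -andbA kle_kcls eq_sym.
rewrite -count_ainj.
set P := kcls x.
have P0 : kcl x i0 \in P by apply/imsetP; exists i0.
have Pi : forall i, kcl x i \in P by move=> i; apply/imsetP; exists i.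
pose Psi (y : Tn n) : {ffun 'I_#|P| -> 'I_n} := [ffun k => y (rep i0 (enum_val k))].
have hy : forall y, y \in [set y | regb y && (kcls y == P)] ->
    forall i j, (x i == x j) = (y i == y j).
  move=> y; rewrite inE => /andP[_ /eqP E] i j.
  have := kle_kcls x y; rewrite E eqxx => /andP[/kleP h1 /kleP h2].
  by apply/eqP/eqP; [exact: h1|exact: h2].
have -> : [set g | @ainj #|P| g] = Psi @: [set y | regb y && (kcls y == P)].
  apply/setP => g; rewrite inE; apply/idP/imsetP.
  - move=> /forallP ga.
    have gi : forall k l, a (g k) = a (g l) -> k = l.
      by move=> k l e; have /forallP /(_ l) /implyP /(_ (introT eqP e)) /eqP := ga k.
    pose y : Tn n := [ffun i => g (enum_rank_in P0 (kcl x i))].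
    have ye : forall i j, (y i == y j) = (x i == x j).
      move=> i j; rewrite !ffunE; apply/eqP/eqP => [e|e].
        have /(congr1 enum_val) := gi _ _ (congr1 a e).
        by rewrite !enum_rankK_in // => /eqP; rewrite kcl_eq => /eqP.
      by have /eqP := e; rewrite -kcl_eq => /eqP ->.
    exists y.
      rewrite inE; apply/andP; split.
        apply/kleP => i j; rewrite !tcompE !ffunE => /gi ->; done.
      rewrite eq_sym -kle_kcls; apply/andP; split; apply/kleP => i j /eqP e; apply/eqP.
        by rewrite ye.
      by rewrite -ye.
    apply/ffunP => k; rewrite !ffunE -(kcls_repr i0 (enum_valP k)).
    by rewrite enum_valK_in.
  - case=> y /[dup] yF; rewrite inE => /andP[ry _] ->.
    apply/forallP => k; apply/forallP => l; apply/implyP; rewrite !ffunE => /eqP e.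
    have : tcomp y a (rep i0 (enum_val k)) = tcomp y a (rep i0 (enum_val l)) by rewrite !tcompE.
    move/(kleP _ _ ry)/eqP; rewrite -hy // -kcl_eq.
    rewrite -(kcls_repr i0 (enum_valP k)) -(kcls_repr i0 (enum_valP l)) => /eqP /enum_val_inj ->.
    by [].
rewrite card_in_imset // => y1 y2 F1 F2 E; apply/ffunP => i.
have Qi := Pi i.
have := congr1 (fun f : {ffun 'I_#|P| -> 'I_n} => f (enum_rank_in P0 (kcl x i))) E.
rewrite /Psi !ffunE enum_rankK_in //.
have r : x (rep i0 (kcl x i)) == x i.
  by have := rep_mem i0 (kcl_mem x i); rewrite inE.
have r1 := r; rewrite (hy _ F1) in r1; rewrite (hy _ F2) in r.
by rewrite (eqP r1) (eqP r).
Qed.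


Lemma swK (c d : 'I_n) : involutive (sw c d).
Proof.
move=> t; rewrite /sw.
case: (eqVneq t c) => [->|tc]; first by rewrite eqxx; case: (eqVneq d c) => [->|dc]; rewrite ?eqxx // (negbTE dc) eqxx.
case: (eqVneq t d) => [->|td]; first by rewrite eqxx.
by rewrite (negbTE tc) (negbTE td).
Qed.

Lemma rank_reg x : regb x -> rank x <= rank a.
Proof.
move=> /kleP rx; rewrite /rank -(card_in_imset (f := a) (D := ran x)).
  apply: subset_leq_card; apply/subsetP => b /imsetP[c /imsetP[i _ ->] ->].
  by apply/imsetP; exists (x i).
move=> b1 b2 /imsetP[i _ ->] /imsetP[j _ ->] e; apply: rx; by rewrite !tcompE.
Qed.

Lemma rank_gt0 x (i0 : 'I_n) : 0 < rank x.
Proof. by apply/card_gt0P; exists (x i0); apply/imsetP; exists i0. Qed.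

Lemma two_in (C : {set Tn n}) x y : x \in C -> y \in C -> x != y -> 1 < #|C|.
Proof.
move=> xC yC neq; rewrite (cardsD1 x C) xC add1n ltnS; apply/card_gt0P.
by exists y; rewrite !inE yC eq_sym neq.
Qed.

Lemma reg_multi x : 1 < n -> regb x -> 1 < #|Rclass a x|.
Proof.
move=> n1 rx; pose i0 : 'I_n := Ordinal (ltn_trans (ltn0Sn 0) n1).
pose i1 : 'I_n := Ordinal n1.
have xC : x \in Rclass a x by rewrite RclassR // inE rx !kle_refl.
case: (pickP (fun ij : 'I_n * 'I_n => x ij.1 != x ij.2)) => [[i j] /= ne | allEq].
  pose y : Tn n := [ffun k => sw (x i) (x j) (x k)].
  have yx : forall k, exists k', y k = x k'.
    move=> k; rewrite ffunE /sw.
    case: eqP => _; first by exists j.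
    by case: eqP => _; [exists i|exists k].
  apply: (@two_in _ x y) => //.
    rewrite RclassR // inE; apply/andP; split; first (apply/andP; split).
    - apply/kleP => k l; rewrite !tcompE.
      have [k' ->] := yx k; have [l' ->] := yx l.
      by move=> e; apply: (kleP _ _ rx); rewrite !tcompE.
    - by apply/kleP => k l e; rewrite !ffunE e.
    - by apply/kleP => k l; rewrite !ffunE => /(can_inj (swK _ _)).
  apply/eqP => /(congr1 (fun f : Tn n => f i)); rewrite ffunE /sw eqxx => e.
  by rewrite e eqxx in ne.
have xe : forall k l, x k = x l.
  by move=> k l; have := allEq (k, l); rewrite /= => /negbFE /eqP.
pose d := if x i0 == i0 then i1 else i0.
have dn : d != x i0.
  rewrite /d; case: (eqVneq (x i0) i0) => [->|h]; last by rewrite eq_sym.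
  by [].
pose y : Tn n := [ffun _ => d].
apply: (@two_in _ x y) => //.
  rewrite RclassR // inE; apply/andP; split; first (apply/andP; split).
  - by apply/kleP => k l _; rewrite !ffunE.
  - by apply/kleP => k l _; rewrite !ffunE.
  - by apply/kleP => k l _; apply: xe.
apply/eqP => /(congr1 (fun f : Tn n => f i0)); rewrite ffunE => e.
by rewrite e eqxx in dn.
Qed.

Lemma kcls_surj (i0 : 'I_n) (P : {set {set 'I_n}}) :
  partition P [set: 'I_n] -> #|P| <= rank a -> exists2 x, regb x & kcls x = P.
Proof.
move=> pP mp; have /and3P[/eqP cov triv n0] := pP.
pose s b := odflt b [pick i | a i == b].
have sK : forall b, b \in ran a -> a (s b) = b.
  move=> b /imsetP[j _ ->]; rewrite /s; case: pickP => [i /eqP //|/(_ j)].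
  by rewrite eqxx.
pose e := enum (s @: ran a).
have se : size e = rank a.
  rewrite -cardE card_in_imset // => b1 b2 h1 h2 E.
  by rewrite -(sK _ h1) E sK.
have inC : forall c, c \in e -> exists2 b, b \in ran a & c = s b.
  by move=> c; rewrite mem_enum => /imsetP[b bR ->]; exists b.
pose idx i := index (pblock P i) (enum P).
have iP : forall i, pblock P i \in P by move=> i; apply: pblock_mem; rewrite cov inE.
have il : forall i, idx i < size e.
  by move=> i; rewrite se; apply: leq_trans mp; rewrite cardE index_mem mem_enum.
pose x : Tn n := [ffun i => nth i0 e (idx i)].
have xe : forall i j, (x i == x j) = (pblock P i == pblock P j).
  move=> i j; rewrite !ffunE nth_uniq ?enum_uniq //; apply/eqP/eqP => [E|E]; last by rewrite /idx E.
  have hi : pblock P i \in enum P by rewrite mem_enum.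
  have hj : pblock P j \in enum P by rewrite mem_enum.
  by rewrite -(nth_index set0 hi) -/(idx i) E nth_index.
exists x.
  apply/kleP => i j; rewrite !tcompE => E; apply/eqP.
  have [b1 b1R h1] := inC _ (mem_nth i0 (il i)).
  have [b2 b2R h2] := inC _ (mem_nth i0 (il j)).
  move: E; rewrite !ffunE h1 h2 !sK // => ->; by [].
have kx : forall i, kcl x i = pblock P i.
  move=> i; apply/setP => j; rewrite inE xe eq_sym eq_pblock //.
  by rewrite cov inE.
apply/setP => Q; apply/imsetP/idP => [[i _ ->]|QP]; first by rewrite kx.
have : Q != set0 by apply/negP => /eqP E; rewrite -E QP in n0.
case/set0Pn => j jQ; exists j => //; rewrite kx.
by apply/esym/def_pblock.
Qed.

End Main.


Section Final.
Variable n : nat.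
Variable a : Tn n.

Definition Fc (Q : {set {set 'I_n}}) := [set y : Tn n | regb a y && (kcls y == Q)].
Definition Rg m := [set x : Tn n | regb a x && (rank x == m)].
Definition MC := [set C in Rclasses a | 1 < #|C|].
Definition Sm m := [set C in Rclasses a | (1 < #|C|) && [forall x in C, rank x == m]].

Lemma RclassF x : regb a x -> Rclass a x = Fc (kcls x).
Proof. by move=> rx; apply/setP => y; rewrite RclassR // !inE -andbA kle_kcls eq_sym. Qed.

Lemma rank_class x y : regb a x -> y \in Rclass a x -> rank y = rank x.
Proof.
move=> rx; rewrite RclassF // inE => /andP[_ /eqP E].
by rewrite !rank_kcls E.
Qed.

Lemma multi_reg C : C \in Rclasses a -> 1 < #|C| -> exists2 x, regb a x & C = Rclass a x.
Proof.
case/imsetP => x _ -> c1; exists x => //; apply: contraTT c1 => nx.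
by rewrite RclassN // cards1.
Qed.

Lemma S_eq m : 1 < n -> Sm m = (@Rclass n a) @: Rg m.
Proof.
move=> n1; apply/setP => C; rewrite !inE; apply/andP/imsetP.
  case=> CR /andP[c1 /forallP H]; have [x rx E] := multi_reg CR c1.
  exists x => //; rewrite inE rx /=.
  by have /implyP := H x; apply; rewrite E RclassR // inE rx !kle_refl.
case=> x /[!inE] /andP[rx /eqP rm] ->; split; first by apply/imsetP; exists x.
rewrite reg_multi //=; apply/forallP => y; apply/implyP => yC.
by rewrite (rank_class rx yC) rm.
Qed.

Lemma card_S m (i0 : 'I_n) : 1 < n -> m <= rank a -> #|Sm m| = stirling2 n m.
Proof.
move=> n1 mp; rewrite S_eq //.
have -> : (@Rclass n a) @: Rg m = Fc @: ((@kcls n) @: Rg m).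
  rewrite -imset_comp; apply: eq_in_imset => x; rewrite inE => /andP[rx _].
  exact: RclassF.
rewrite card_in_imset; last first.
  move=> Q1 Q2 /imsetP[x1 /[!inE] /andP[r1 _] ->] _ E.
  have : x1 \in Fc (kcls x1) by rewrite inE r1 eqxx.
  by rewrite E inE => /andP[_ /eqP].
have -> : (@kcls n) @: Rg m = Pi [set: 'I_n] m.
  apply/setP => P; rewrite inE; apply/imsetP/idP.
    case=> x /[!inE] /andP[_ /eqP rm] ->; rewrite kcls_part -rank_kcls rm eqxx.
    by [].
  case/andP => pP /eqP cP.
  have mp' : #|P| <= rank a by rewrite cP.
  have [x rx E] := kcls_surj i0 pP mp'.
  by exists x => //; rewrite inE rx rank_kcls E cP eqxx.
by rewrite (@Pi_count _ n [set: 'I_n] m) // cardsT card_ord.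
Qed.


Lemma sum_MC (F : {set Tn n} -> nat) (i0 : 'I_n) : 1 < n ->
  \sum_(C in MC) F C = \sum_(1 <= m < (rank a).+1) \sum_(C in Sm m) F C.
Proof.
move=> n1.
rewrite (eq_bigr (fun m => \sum_(C in MC) (if [forall x in C, rank x == m] then F C else 0))); last first.
  move=> m _; rewrite -big_mkcondr; apply: eq_bigl => C; rewrite !inE andbA //.
rewrite exchange_big /=.
apply: eq_bigr => C; rewrite inE => /andP[CR c1]; have [x rx E] := multi_reg CR c1.
have Hr : forall m, [forall y in C, rank y == m] = (rank x == m).
  move=> m; apply/forallP/eqP => [H|<-].
    have /implyP := H x; rewrite E RclassR // inE rx !kle_refl => /(_ isT) /eqP.
    by [].
  move=> y; apply/implyP; rewrite E => yC; by rewrite (rank_class rx yC).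
under eq_bigr => m _ do rewrite Hr.
rewrite -big_mkcond /= (eq_bigl (fun m => m == rank x)); last by move=> m; rewrite eq_sym.
by rewrite big_nat1_eq (rank_gt0 x i0) ltnS rank_reg.
Qed.

Lemma Rclasses_gt0 C : C \in Rclasses a -> 0 < #|C|.
Proof. by case/imsetP => x _ ->; apply/card_gt0P; exists x; rewrite inE /Rrel eqxx. Qed.

End Final.

Theorem proposition7 (n : nat) (a : Tn n) : 1 < n ->
  let p := rank a in
  (forall m, 1 <= m <= p ->
     #|[set C in Rclasses a | (1 < #|C|) && [forall x in C, rank x == m]]|
       = stirling2 n m
     /\ (forall C, C \in Rclasses a -> 1 < #|C| -> [forall x in C, rank x == m] ->
           #|C| = m`! * fibesum a m))
  /\ (forall C, C \in Rclasses a -> 1 < #|C| ->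
        exists2 m, 1 <= m <= p & [forall x in C, rank x == m])
  /\ #|[set C in Rclasses a | 1 < #|C|]| = \sum_(1 <= m < p.+1) stirling2 n m
  /\ #|[set C in Rclasses a | #|C| == 1]|
       = n ^ n - \sum_(1 <= m < p.+1) stirling2 n m * (m`! * fibesum a m).
Proof.
move=> n1 p.
pose i0 : 'I_n := Ordinal (ltn_trans (ltn0Sn 0) n1).
have part1 : forall m, 1 <= m <= p ->
     #|Sm a m| = stirling2 n m
     /\ (forall C, C \in Rclasses a -> 1 < #|C| -> [forall x in C, rank x == m] ->
           #|C| = m`! * fibesum a m).
  move=> m /andP[m1 mp]; split; first exact: card_S i0 n1 mp.
  move=> C CR c1 /forallP H; have [x rx E] := multi_reg CR c1.
  have rxm : rank x = m.
    have /implyP := H x; rewrite E RclassR // inE rx !kle_refl => /(_ isT) /eqP.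
    by [].
  by rewrite E (class_card i0 rx) rxm.
split; first exact: part1.
split.
  move=> C CR c1; have [x rx E] := multi_reg CR c1.
  exists (rank x); first by rewrite (rank_gt0 x i0) rank_reg.
  apply/forallP => y; apply/implyP; rewrite E => yC; by rewrite (rank_class rx yC).
split.
  rewrite -sum1_card (sum_MC a (fun _ => 1) i0 n1).
  apply: eq_big_nat => m /andP[m1 mp]; rewrite sum1_card.
  have mm : 1 <= m <= p by rewrite m1 -ltnS.
  have [h1 _] := part1 m mm.
  by rewrite h1.
have tot : n ^ n = \sum_(C in Rclasses a) #|C|.
  have <- : #|[set: Tn n]| = n ^ n by rewrite cardsT card_ffun card_ord.
  apply: card_partition.
  have -> : Rclasses a = equivalence_partition (Rrel a) [set: Tn n].
    apply/setP => C; apply/imsetP/imsetP => [[x _ ->]|[x _ ->]]; exists x => //;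
      by apply/setP => y; rewrite !inE.
  apply: equivalence_partitionP => x y z _ _ _; split; first exact: eqxx.
  by move/eqP => e; rewrite /Rrel e.
rewrite (bigID (fun C : {set Tn n} => #|C| == 1)) /= in tot.
have e1 : \sum_(C in Rclasses a | #|C| == 1) #|C| = #|[set C in Rclasses a | #|C| == 1]|.
  by rewrite -sum1_card; apply: eq_big => [C|C /andP[_ /eqP]]; rewrite ?inE.
have e2 : \sum_(C in Rclasses a | #|C| != 1) #|C| =
          \sum_(1 <= m < p.+1) stirling2 n m * (m`! * fibesum a m).
  rewrite (eq_bigl (fun C => C \in MC a)); last first.
    move=> C; rewrite !inE; case CR: (C \in Rclasses a) => //=.
    by have := Rclasses_gt0 CR; case: #|C| => [|[|k]].
  rewrite (sum_MC a (fun C => #|C|) i0 n1).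
  apply: eq_big_nat => m /andP[m1 mp].
  have mm : 1 <= m <= p by rewrite m1 -ltnS.
  have [h1 h2] := part1 m mm.
  rewrite (eq_bigr (fun _ => m`! * fibesum a m)); last first.
    by move=> C; rewrite inE => /andP[CR /andP[c1 H]]; apply: h2.
  by rewrite sum_nat_const h1.
by rewrite tot e1 e2 addnK.
Qed.
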